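(* (a) Let $(A,\succ_A,\prec_A,\omega)$ be a quadratic anti-pre-Leibniz algebra. Then $\omega$ is a nondegenerate skew-symmetric $2$-cocycle on the sub-adjacent Leibniz algebra $(A,\circ_A)$, $\circ_A=\succ_A+\prec_A$. (b) Conversely, let $\omega$ be a nondegenerate skew-symmetric $2$-cocycle on a Leibniz algebra $(A,\circ_A)$, and let $\succ_A,\prec_A$ be defined by $\omega(x\succ_A y,z)=\omega(y,x\circ_A z)$ and $\omega(x\prec_A y,z)=-\omega(x,y\circ_A z+z\circ_A y)$. Then $(A,\succ_A,\prec_A)$ is an anti-pre-Leibniz algebra and $\omega$ is invariant on it, i.e. $(A,\succ_A,\prec_A,\omega)$ is a quadratic anti-pre-Leibniz algebra.
   Context: All vector spaces are finite-dimensional over a field $\mathbb K$ of characteristic zero. A Leibniz algebra is a vector space $A$ with multiplication $\circ_A$ satisfying $x\circ_A(y\circ_A z)=(x\circ_A y)\circ_A z+y\circ_A(x\circ_A z)$. A bilinear form $\omega$ on $(A,\circ_A)$ is a $2$-cocycle if $\omega(z,x\circ_A y)=\omega(x,y\circ_A z+z\circ_A y)-\omega(y,x\circ_A z)$ for all $x,y,z$. An anti-pre-Leibniz algebra is a vector space $A$ with multiplications $\succ_A,\prec_A$ such that, with $x\circ_A y=x\succ_A y+x\prec_A y$, for all $x,y,z$: (AL1) $(x\circ_A y)\prec_A z=x\succ_A(y\circ_A z)-y\succ_A(x\circ_A z)$; (AL2) $(x\circ_A y)\succ_A z=y\succ_A(x\succ_A z)-x\succ_A(y\succ_A z)$; (AL3)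 $x\prec_A(y\circ_A z)=(y\succ_A x)\prec_A z-y\succ_A(x\prec_A z)$; (AL4) $(x\succ_A y)\prec_A z=-(y\prec_A x)\prec_A z$. A bilinear form $\omega$ on an anti-pre-Leibniz algebra is invariant if $\omega(x\succ_A y,z)=\omega(y,x\circ_A z)$ and $\omega(x\prec_A y,z)=-\omega(x,y\circ_A z+z\circ_A y)$ for all $x,y,z$. A quadratic anti-pre-Leibniz algebra is an anti-pre-Leibniz algebra with a nondegenerate skew-symmetric invariant bilinear form. *)

(* Defs.v *)
(* Finite-dimensional vector spaces over a field K of
   characteristic zero are modelled as  V : vectType K  with [pchar K] =i pred0. *)
From HB Require Import structures.
From mathcomp Require Import all_boot all_order all_algebra.
Set Implicit Arguments. Unset Strict Implicit. Unset Printing Implicit Defensive.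
Import GRing.Theory.
Local Open Scope ring_scope.

Section Defs.
Variables (K : fieldType) (V : vectType K).

Definition bilinear_mul (m : V -> V -> V) : Prop :=
  (forall (a : K) (x y z : V), m (a *: x + y) z = a *: m x z + m y z) /\
  (forall (a : K) (x y z : V), m z (a *: x + y) = a *: m z x + m z y).

Definition bilinear_form (w : V -> V -> K) : Prop :=
  (forall (a : K) (x y z : V), w (a *: x + y) z = a * w x z + w y z) /\
  (forall (a : K) (x y z : V), w z (a *: x + y) = a * w z x + w z y).

Definition skew_sym_form (w : V -> V -> K) : Prop :=
  forall x y : V, w x y = - w y x.

Definition nondeg_form (w : V -> V -> K) : Prop :=
  forall x : V, (forall y : V, w x y = 0) -> x = 0.

Definition Leibniz (circ : V -> V -> V) : Prop :=
  bilinear_mul circ /\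
  forall x y z : V, circ x (circ y z) = circ (circ x y) z + circ y (circ x z).

Definition cocycle2 (circ : V -> V -> V) (w : V -> V -> K) : Prop :=
  forall x y z : V, w z (circ x y) = w x (circ y z + circ z y) - w y (circ x z).

Definition sub_adjacent (succ prec : V -> V -> V) : V -> V -> V :=
  fun x y => succ x y + prec x y.

Definition anti_pre_Leibniz (succ prec : V -> V -> V) : Prop :=
  let circ := sub_adjacent succ prec in
  bilinear_mul succ /\ bilinear_mul prec /\
  [/\ (forall x y z, prec (circ x y) z = succ x (circ y z) - succ y (circ x z)),
      (forall x y z, succ (circ x y) z = succ y (succ x z) - succ x (succ y z)),
      (forall x y z, prec x (circ y z) = prec (succ y x) z - succ y (prec x z)) &
      (forall x y z, prec (succ x y) z = - prec (prec y x) z)].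

Definition invariant_form (succ prec : V -> V -> V) (w : V -> V -> K) : Prop :=
  let circ := sub_adjacent succ prec in
  (forall x y z, w (succ x y) z = w y (circ x z)) /\
  (forall x y z, w (prec x y) z = - w x (circ y z + circ z y)).

Definition quadratic_APL (succ prec : V -> V -> V) (w : V -> V -> K) : Prop :=
  [/\ anti_pre_Leibniz succ prec, bilinear_form w, nondeg_form w,
      skew_sym_form w & invariant_form succ prec w].

Definition defined_by_form (circ : V -> V -> V) (w : V -> V -> K)
  (succ prec : V -> V -> V) : Prop :=
  (forall x y z, w (succ x y) z = w y (circ x z)) /\
  (forall x y z, w (prec x y) z = - w x (circ y z + circ z y)).

End Defs.

(* Main.v *)
Require Import Defs.
From HB Require Import structures.
From mathcomp Require Import all_boot all_order all_algebra.
From mathcomp Require Import ring.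
From Stdlib Require Import ClassicalEpsilon.
Import GRing.Theory.
Local Open Scope ring_scope.

Section Helpers.
Set Implicit Arguments.
Variables (K : fieldType) (V : vectType K).

Section Form.
Variable w : V -> V -> K.
Hypothesis Hw : bilinear_form w.

Lemma w0l z : w 0 z = 0.
Proof.
have := Hw.1 1 0 0 z; rewrite scale1r addr0 mul1r.
by rewrite -{1}[w 0 z]addr0 => /addrI ->.
Qed.
Lemma w0r z : w z 0 = 0.
Proof.
have := Hw.2 1 0 0 z; rewrite scale1r addr0 mul1r.
by rewrite -{1}[w z 0]addr0 => /addrI ->.
Qed.
Lemma wDl x y z : w (x + y) z = w x z + w y z.
Proof. by have := Hw.1 1 x y z; rewrite scale1r mul1r. Qed.
Lemma wDr x y z : w z (x + y) = w z x + w z y.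
Proof. by have := Hw.2 1 x y z; rewrite scale1r mul1r. Qed.
Lemma wZl a x z : w (a *: x) z = a * w x z.
Proof. by have := Hw.1 a x 0 z; rewrite addr0 w0l addr0. Qed.
Lemma wZr a x z : w z (a *: x) = a * w z x.
Proof. by have := Hw.2 a x 0 z; rewrite addr0 w0r addr0. Qed.
Lemma wNl x z : w (- x) z = - w x z.
Proof. by rewrite -scaleN1r wZl mulN1r. Qed.
Lemma wNr x z : w z (- x) = - w z x.
Proof. by rewrite -scaleN1r wZr mulN1r. Qed.
Lemma wBl x y z : w (x - y) z = w x z - w y z.
Proof. by rewrite wDl wNl. Qed.
Lemma wBr x y z : w z (x - y) = w z x - w z y.
Proof. by rewrite wDr wNr. Qed.

Lemma wsuml n (c : 'I_n -> K) (b : 'I_n -> V) z :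
  w (\sum_(i < n) c i *: b i) z = \sum_(i < n) c i * w (b i) z.
Proof.
apply: (big_rec2 (fun a s => w a z = s)); first exact: w0l.
by move=> i a s _ <-; rewrite wDl wZl.
Qed.
Lemma wsumr n (c : 'I_n -> K) (b : 'I_n -> V) z :
  w z (\sum_(i < n) c i *: b i) = \sum_(i < n) c i * w z (b i).
Proof.
apply: (big_rec2 (fun a s => w z a = s)); first exact: w0r.
by move=> i a s _ <-; rewrite wDr wZr.
Qed.

Hypothesis Hn : nondeg_form w.

Lemma wext a b : (forall t, w a t = w b t) -> a = b.
Proof.
move=> H; apply/eqP; rewrite -subr_eq0; apply/eqP; apply: Hn => t.
by rewrite wBl H subrr.
Qed.

Lemma riesz (f : V -> K) :
  (forall a x y, f (a *: x + y) = a * f x + f y) ->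
  exists u, forall z, w u z = f z.
Proof.
move=> Hf.
have f0 : f 0 = 0.
  have := Hf 1 0 0; rewrite scale1r addr0 mul1r.
  by rewrite -{1}[f 0]addr0 => /addrI ->.
have fsum n (c : 'I_n -> K) (b : 'I_n -> V) :
    f (\sum_(i < n) c i *: b i) = \sum_(i < n) c i * f (b i).
  apply: (big_rec2 (fun a s => f a = s)); first exact: f0.
  by move=> i a s _ <-; rewrite Hf.
pose n := \dim (fullv : {vspace V}).
pose b := vbasis (fullv : {vspace V}).
have expand z : z = \sum_(i < n) coord b i z *: b`_i := coord_vbasis (memvf z).
have key u : (forall i : 'I_n, w u b`_i = f b`_i) -> forall z, w u z = f z.
  move=> H z; rewrite (expand z) wsumr fsum; apply: eq_bigr => i _.
  by rewrite H.
pose M : 'M[K]_n := \matrix_(i, j) w b`_i b`_j.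
have Mu : M \in unitmx.
  rewrite unitmxE unitfE; apply/negP => /det0P [v vn0 vM].
  have : \sum_(i < n) v 0 i *: b`_i = 0.
    apply: Hn => y; rewrite (expand y) wsumr; apply: big1 => j _.
    rewrite wsuml.
    have := congr1 (fun A : 'rV_n => A 0 j) vM; rewrite !mxE => E.
    suff -> : \sum_(i < n) v 0 i * w b`_i b`_j = 0 by rewrite mulr0.
    rewrite -[RHS]E; apply: eq_bigr => i _; by rewrite mxE.
  move/freeP: (basis_free (vbasisP (fullv : {vspace V}))) => fr /fr vi.
  case/negP: vn0; apply/eqP/rowP => i; rewrite mxE.
  by rewrite (_ : (0 : 'I_1) = ord0) ?vi //; apply/val_inj.
pose t : 'rV[K]_n := \row_j f b`_j.
pose c := t *m invmx M.
exists (\sum_(i < n) c 0 i *: b`_i); apply: key => j.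
rewrite wsuml.
have : (c *m M) 0 j = t 0 j by rewrite /c mulmxKV.
rewrite mxE /t mxE => <-; apply: eq_bigr => i _; by rewrite /M !mxE.
Qed.

End Form.

Section Mul.
Variable m : V -> V -> V.
Hypothesis Hm : bilinear_mul m.
Lemma m0l z : m 0 z = 0.
Proof.
have := Hm.1 1 0 0 z; rewrite scale1r addr0 scale1r.
by rewrite -{1}[m 0 z]addr0 => /addrI/esym.
Qed.
Lemma m0r z : m z 0 = 0.
Proof.
have := Hm.2 1 0 0 z; rewrite scale1r addr0 scale1r.
by rewrite -{1}[m z 0]addr0 => /addrI/esym.
Qed.
Lemma mDl x y z : m (x + y) z = m x z + m y z.
Proof. by have := Hm.1 1 x y z; rewrite !scale1r. Qed.
Lemma mDr x y z : m z (x + y) = m z x + m z y.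
Proof. by have := Hm.2 1 x y z; rewrite !scale1r. Qed.
Lemma mZl a x z : m (a *: x) z = a *: m x z.
Proof. by have := Hm.1 a x 0 z; rewrite addr0 m0l addr0. Qed.
Lemma mZr a x z : m z (a *: x) = a *: m z x.
Proof. by have := Hm.2 a x 0 z; rewrite addr0 m0r addr0. Qed.
Lemma mNl x z : m (- x) z = - m x z.
Proof. by rewrite -scaleN1r mZl scaleN1r. Qed.
Lemma mNr x z : m z (- x) = - m z x.
Proof. by rewrite -scaleN1r mZr scaleN1r. Qed.
Lemma mBl x y z : m (x - y) z = m x z - m y z.
Proof. by rewrite mDl mNl. Qed.
Lemma mBr x y z : m z (x - y) = m z x - m z y.
Proof. by rewrite mDr mNr. Qed.
End Mul.

End Helpers.

Lemma lin_close (K : fieldType) (a b c d k : K) :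
  a = b -> c - d = k * (a - b) -> c = d.
Proof. by move=> -> /eqP; rewrite subrr mulr0 subr_eq0 => /eqP. Qed.

Lemma partA (K : fieldType) (V : vectType K) (succ prec : V -> V -> V) (w : V -> V -> K) :
     quadratic_APL succ prec w ->
     [/\ Leibniz (sub_adjacent succ prec), bilinear_form w, nondeg_form w,
         skew_sym_form w & cocycle2 (sub_adjacent succ prec) w].
Proof.
move=> [[Bs [Bp [A1 A2 A3 A4]]] Hw Hn Hs [Is Ip]].
set c := sub_adjacent succ prec.
have cE x y : c x y = succ x y + prec x y by [].
have A1' : forall x y z, prec (c x y) z = succ x (c y z) - succ y (c x z) := A1.
have A2' : forall x y z, succ (c x y) z = succ y (succ x z) - succ x (succ y z) := A2.
have A3' : forall x y z, prec x (c y z) = prec (succ y x) z - succ y (prec x z) := A3.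
have Is' : forall x y z, w (succ x y) z = w y (c x z) := Is.
have Ip' : forall x y z, w (prec x y) z = - w x (c y z + c z y) := Ip.
split => //.
- split.
    split => a x y z; rewrite !cE ?(Bs.1, Bp.1, Bs.2, Bp.2) scalerDr addrACA //.
  move=> x y z.
  rewrite [c x (c y z)]cE [c (c x y) z]cE [c y (c x z)]cE A1' A2' !A3' A4.
  have E := A1' x y z; rewrite cE (mDl Bp) in E.
  apply: (wext Hw Hn) => t.
  have E' := congr1 (fun v => w v t) E; simpl in E'.
  move: E'; rewrite ?(cE, mDl Bs, mDr Bs, mNl Bs, mNr Bs, mBl Bs, mBr Bs,
     mDl Bp, mDr Bp, mNl Bp, mNr Bp, mBl Bp, mBr Bp,
     wDl Hw, wDr Hw, wNl Hw, wNr Hw, wBl Hw, wBr Hw) => E'.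
  first [ apply: (@lin_close _ _ _ _ _ 1 E'); ring | apply: (@lin_close _ _ _ _ _ (-1) E'); ring ].
- move=> x y z.
  rewrite (Hs z) [c x y]cE (wDl Hw) Is' Ip'; ring.
Qed.

Definition Sf (K : fieldType) (V : vectType K) (w : V -> V -> K) u v := w u v + w v u.
Definition Cf (K : fieldType) (V : vectType K) (circ : V -> V -> V) (w : V -> V -> K) a b c :=
  w c (circ a b) - w a (circ b c + circ c b) + w b (circ a c).

Arguments Sf {K V}.
Arguments Cf {K V}.

Ltac normB Bc Hw leibR :=
  rewrite ?(leibR, mDl Bc, mDr Bc, mNl Bc, mNr Bc, mBl Bc, mBr Bc,
     wDl Hw, wDr Hw, wNl Hw, wNr Hw, wBl Hw, wBr Hw).

Lemma partB (K : fieldType) (charK : [pchar K] =i pred0)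
    (V : vectType K) (circ : V -> V -> V) (w : V -> V -> K) :
     Leibniz circ -> bilinear_form w -> nondeg_form w -> skew_sym_form w ->
     cocycle2 circ w ->
     (exists succ prec : V -> V -> V, defined_by_form circ w succ prec) /\
     (forall succ prec : V -> V -> V, defined_by_form circ w succ prec ->
        quadratic_APL succ prec w).
Proof.
move=> [Bc Lc] Hw Hn Hs Hc.
have leibR a b d : circ (circ a b) d = circ a (circ b d) - circ b (circ a d).
  by rewrite Lc addrK.
have two0 : (2 : K) != 0 by rewrite ((pcharf0P K).1 charK 2).
split.
  have Rs x y : exists u, forall z, w u z = w y (circ x z).
    by apply: (riesz Hw Hn) => a z z'; rewrite Bc.2 Hw.2.
  have Rp x y : exists u, forall z, w u z = - w x (circ y z + circ z y).
    apply: (riesz Hw Hn) => a z z'; rewrite Bc.2 Bc.1.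
    rewrite !(wDr Hw) !(wZr Hw); ring.
  exists (fun x y => proj1_sig (constructive_indefinite_description _ (Rs x y))),
    (fun x y => proj1_sig (constructive_indefinite_description _ (Rp x y))).
  split => x y z.
    exact: (proj2_sig (constructive_indefinite_description _ (Rs x y))).
  exact: (proj2_sig (constructive_indefinite_description _ (Rp x y))).
move=> succ prec [Ds Dp].
have Hc' x y : sub_adjacent succ prec x y = circ x y.
  apply: (wext Hw Hn) => t.
  by rewrite /sub_adjacent (wDl Hw) Ds Dp (Hs (circ x y)) Hc !(wDr Hw); ring.
have Bs : bilinear_mul succ.
  split => a x y z; apply: (wext Hw Hn) => t;
  rewrite ?(Ds, wDl Hw, wZl Hw); normB Bc Hw leibR; rewrite ?(mZl Bc, mZr Bc, wZl Hw, wZr Hw) //.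
have Bp : bilinear_mul prec.
  split => a x y z; apply: (wext Hw Hn) => t;
  rewrite ?(Dp, wDl Hw, wZl Hw); normB Bc Hw leibR; rewrite ?(mZl Bc, mZr Bc, wZl Hw, wZr Hw); ring.
split => //.
  split => //; split => //.
  split => x y z; rewrite ?Hc'.
  - apply: (wext Hw Hn) => t; rewrite Dp (wBl Hw) !Ds.
    have S0 u v : Sf w u v = 0 by rewrite /Sf Hs addNr.
    have C0 a b d : Cf circ w a b d = 0 by rewrite /Cf Hc; ring.
    set cc := circ.
    have key : 2 * (- w (cc x y) (cc z t + cc t z) - (w (cc y z) (cc x t) - w (cc x z) (cc y t)))
      = - Sf w (cc x t) (cc y z) + Sf w (cc y t) (cc x z) - Sf w (cc t z) (cc x y)
        - Sf w (cc z t) (cc x y) - Cf cc w t z (cc x y) - Cf cc w x t (cc y z)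
        + Cf cc w x y (cc t z) + Cf cc w x y (cc z t) - Cf cc w x z (cc y t)
        + Cf cc w y t (cc x z) + Cf cc w y z (cc x t) - Cf cc w z t (cc x y).
      rewrite /Sf /Cf /cc; normB Bc Hw leibR; ring.
    rewrite !S0 !C0 in key.
    rewrite ?oppr0 ?addr0 ?subr0 in key.
    by move/eqP: key; rewrite mulf_eq0 (negbTE two0) /= subr_eq0 => /eqP.
  - apply: (wext Hw Hn) => t; rewrite ?(Ds, Dp, wBl Hw, wNl Hw).
    normB Bc Hw leibR; ring.
  - apply: (wext Hw Hn) => t; rewrite ?(Ds, Dp, wBl Hw, wNl Hw).
    normB Bc Hw leibR; ring.
  - apply: (wext Hw Hn) => t; rewrite ?(Ds, Dp, wBl Hw, wNl Hw).
    normB Bc Hw leibR; ring.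
by split => x y z /=; rewrite !Hc'.
Qed.

Theorem proposition2p22 (K : fieldType) (charK : [pchar K] =i pred0)
    (V : vectType K) :
  (* (a) *)
  (forall (succ prec : V -> V -> V) (w : V -> V -> K),
     quadratic_APL succ prec w ->
     [/\ Leibniz (sub_adjacent succ prec), bilinear_form w, nondeg_form w,
         skew_sym_form w & cocycle2 (sub_adjacent succ prec) w]) /\
  (* (b) *)
  (forall (circ : V -> V -> V) (w : V -> V -> K),
     Leibniz circ -> bilinear_form w -> nondeg_form w -> skew_sym_form w ->
     cocycle2 circ w ->
     (exists succ prec : V -> V -> V, defined_by_form circ w succ prec) /\
     (forall succ prec : V -> V -> V, defined_by_form circ w succ prec ->
        quadratic_APL succ prec w)).
Proof.
split; first exact: partA.
exact: partB.
Qed.
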